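(* Let $A$ be a commutative ring. Assume that the maximal spectrum $\mathrm{Max}(A)$ is a Noetherian topological space and that $\dim \mathrm{Max}(A)\le d-2$. Then $A$ satisfies the absolute flexible stable rank condition $\mathrm{AFSR}_d$.
   Context: Here $\dim\mathrm{Max}(A)$ is the dimension of the maximal spectrum of $A$, i.e. the supremum of the lengths of chains of prime ideals each of which coincides with its Jacobson radical (an intersection of maximal ideals). A commutative ring $A$ satisfies $\mathrm{AFSR}_d$ if for any row $(b_1,\ldots,b_d)$ with coordinates in $A$, there exists $c_1\in A$ such that for any invertible $\varepsilon_1\in A^*$ there exists $c_2\in A$ such that for any $\varepsilon_2\in A^*$, $\ldots$, there exists $c_{d-1}\in A$ such that for any $\varepsilon_{d-1}\in A^*$, every maximal ideal of $A$ containing the ideal $\langle b_1+\varepsilon_1c_1b_d,\ldots,b_{d-1}+\varepsilon_{d-1}c_{d-1}b_d\rangle$ already contains the ideal $\langle b_1,\ldots,b_d\rangle$. *)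

(* Defs.v *)
(* Commutative rings = comPzRingType (the zero ring allowed). *)
From mathcomp Require Import all_boot all_order all_algebra.
Set Implicit Arguments. Unset Strict Implicit. Unset Printing Implicit Defensive.
Import GRing.Theory.
Local Open Scope ring_scope.

Section Defs.
Variable A : comPzRingType.

Definition subsetA (I J : A -> Prop) : Prop := forall x, I x -> J x.

Definition is_ideal (I : A -> Prop) : Prop :=
  [/\ I 0, (forall x y, I x -> I y -> I (x + y)) & (forall a x, I x -> I (a * x))].

Definition gen_ideal (S : A -> Prop) : A -> Prop :=
  fun x => forall I, is_ideal I -> subsetA S I -> I x.

Definition is_maximal_ideal (M : A -> Prop) : Prop :=
  [/\ is_ideal M, ~ M 1 &
      forall J, is_ideal J -> subsetA M J -> ~ J 1 -> subsetA J M].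

Definition is_prime_ideal (P : A -> Prop) : Prop :=
  [/\ is_ideal P, ~ P 1 & forall a b, P (a * b) -> P a \/ P b].

Definition jacobson_radical (I : A -> Prop) : A -> Prop :=
  fun x => forall M, is_maximal_ideal M -> subsetA I M -> M x.

(* prime ideals coinciding with their Jacobson radical (points of j-Spec) *)
Definition is_jprime (P : A -> Prop) : Prop :=
  is_prime_ideal P /\ (forall x, P x <-> jacobson_radical P x).

Definition strict_subsetA (I J : A -> Prop) : Prop :=
  subsetA I J /\ exists x, J x /\ ~ I x.

Definition jprime_chain (P : nat -> A -> Prop) (k : nat) : Prop :=
  (forall i, (i <= k)%N -> is_jprime (P i)) /\
  (forall i, (i < k)%N -> strict_subsetA (P i) (P i.+1)).

(* dim Max(A) <= d - 2 (in Z, sup of the empty set being -oo):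
   every chain of j-primes has length k with k <= d - 2, i.e. k + 2 <= d. *)
Definition dimMax_le_sub2 (d : nat) : Prop :=
  forall P k, jprime_chain P k -> (k + 2 <= d)%N.

(* Zariski topology on Max(A): closed sets are V(S) = {M maximal | S ⊆ M}.
   Sets of points of Max(A) are predicates on subsets of A. *)
Definition max_closed (C : (A -> Prop) -> Prop) : Prop :=
  exists S : A -> Prop,
    forall M, C M <-> (is_maximal_ideal M /\ subsetA S M).

Definition max_noetherian : Prop :=
  forall C : nat -> (A -> Prop) -> Prop,
    (forall n, max_closed (C n)) ->
    (forall n M, C n.+1 M -> C n M) ->
    exists N, forall n, (N <= n)%N -> forall M, C n M <-> C N M.

Definition is_unit (e : A) : Prop := exists f, e * f = 1.

(* The game defining AFSR_d.  [row] is the set {b_1,...,b_d}, [bd] = b_d,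
   [rest] the b_i still to be treated, [acc] the elements
   b_i + eps_i c_i b_d already produced. *)
Fixpoint afsr_game (row : A -> Prop) (bd : A) (rest acc : seq A) : Prop :=
  match rest with
  | [::] => forall M, is_maximal_ideal M ->
              subsetA (gen_ideal (fun x => x \in acc)) M ->
              subsetA (gen_ideal row) M
  | b :: rest' => exists c : A, forall e : A, is_unit e ->
              afsr_game row bd rest' (rcons acc (b + e * c * bd))
  end.

Definition AFSR (d : nat) : Prop :=
  forall (bs : seq A) (bd : A), size bs = d.-1 ->
    afsr_game (fun x => x \in rcons bs bd) bd bs [::].

End Defs.

(* Main.v *)
Require Import Defs.
From mathcomp Require Import all_boot all_order all_algebra.
From mathcomp Require Import ring zify.
From Stdlib Require Import Classical ClassicalEpsilon.
Set Implicit Arguments. Unset Strict Implicit. Unset Printing Implicit Defensive.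
Import GRing.Theory.
Local Open Scope ring_scope.

Section Proofs.
Variable A : comPzRingType.
Implicit Types (I M P : A -> Prop).

Lemma ideal0 I : is_ideal I -> I 0.
Proof. by case. Qed.
Lemma idealD I x y : is_ideal I -> I x -> I y -> I (x + y).
Proof. by case=> _ H _; apply: H. Qed.
Lemma idealMl I a x : is_ideal I -> I x -> I (a * x).
Proof. by case=> _ _ H; apply: H. Qed.
Lemma idealMr I a x : is_ideal I -> I x -> I (x * a).
Proof. by move=> HI Hx; rewrite mulrC; apply: idealMl. Qed.
Lemma idealB I x y : is_ideal I -> I x -> I y -> I (x - y).
Proof.
move=> HI Hx Hy; have -> : x - y = x + (-1) * y by ring.
by apply: idealD => //; apply: idealMl.
Qed.

Lemma max_prime M : is_maximal_ideal M -> is_prime_ideal M.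
Proof.
case=> HI H1 Hmax; split => // a b Hab.
case: (classic (M a)) => Ha; [by left| right].
pose J := fun x => exists m r, M m /\ x = m + r * a.
have HJ : is_ideal J.
  split.
  - exists 0, 0; split; [exact: ideal0|ring].
  - move=> x y [m1 [r1 [Hm1 ->]]] [m2 [r2 [Hm2 ->]]].
    exists (m1 + m2), (r1 + r2); split; [exact: idealD|ring].
  - move=> c x [m1 [r1 [Hm1 ->]]].
    exists (c * m1), (c * r1); split; [exact: idealMl|ring].
have HMJ : subsetA M J by move=> x Hx; exists x, 0; split=> //; ring.
case: (classic (J 1)) => HJ1.
  case: HJ1 => m [r [Hm E]].
  have -> : b = b * m + r * (a * b) by rewrite -[b in LHS]mulr1 E; ring.
  by apply: idealD => //; [apply: idealMl | apply: idealMl].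
exfalso; apply: Ha; apply: (Hmax J HJ HMJ HJ1).
by exists 0, 1; split; [exact: ideal0|ring].
Qed.

Lemma max_jprime M : is_maximal_ideal M -> is_jprime M.
Proof.
move=> HM; split; first exact: max_prime.
move=> x; split.
- by move=> Hx M' _ HMM'; apply: HMM'.
- by move=> H; apply: (H M HM).
Qed.

Lemma jprime_has_max P : is_jprime P -> exists M, is_maximal_ideal M /\ subsetA P M.
Proof.
case=> [[_ H1 _] HJ]; apply: NNPP => Hn; apply: H1; apply/HJ => M HM HPM.
by exfalso; apply: Hn; exists M.
Qed.

Definition X := (A -> Prop) -> Prop.

Definition strict_sub (C' C : X) :=
  (forall M, C' M -> C M) /\ exists M, C M /\ ~ C' M.

Lemma noeth_ind (HN : max_noetherian A) (Phi : X -> Prop) :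
  (forall C, max_closed C ->
     (forall C', max_closed C' -> strict_sub C' C -> Phi C') -> Phi C) ->
  forall C, max_closed C -> Phi C.
Proof.
move=> H C0 HC0; apply: NNPP => nP0.
pose good C C' := max_closed C' /\ strict_sub C' C /\ ~ Phi C'.
pose step C := epsilon (inhabits C) (good C).
have Hstep : forall C, max_closed C -> ~ Phi C -> good C (step C).
  move=> C HC nP; apply: (epsilon_spec (inhabits C) (good C)).
  apply: NNPP => Hn; apply: nP; apply: H => // C' HC' Hs.
  apply: NNPP => nP'; apply: Hn; exists C'; by split.
pose sq n := Nat.iter n step C0.
have Hsq : forall n, max_closed (sq n) /\ ~ Phi (sq n).
  elim=> [|n [IH1 IH2]]; first by split.
  have [G1 [G2 G3]] := Hstep _ IH1 IH2.
  by split.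
have [N HNn] := HN sq (fun n => (Hsq n).1)
  (fun n M => (proj1 (proj1 (proj2 (Hstep _ (Hsq n).1 (Hsq n).2)))) M).
have [_ [[_ [M [HM1 HM2]]] _]] := Hstep _ (Hsq N).1 (Hsq N).2.
apply: HM2; apply/(HNn N.+1 (leqnSn N)); exact: HM1.
Qed.

Definition Vsub P (C : X) := forall M, is_maximal_ideal M -> subsetA P M -> C M.

Definition PhiK (C : X) := exists (m : nat) (Q : nat -> A -> Prop),
  (forall k, (k < m)%N -> is_jprime (Q k) /\ Vsub (Q k) C) /\
  (forall P, is_jprime P -> Vsub P C -> exists k, (k < m)%N /\ subsetA (Q k) P).

Lemma closed_sub (C : X) T : (forall M, C M <-> is_maximal_ideal M /\ subsetA T M) ->
  forall x, max_closed (fun M => C M /\ M x).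
Proof.
move=> HT x; exists (fun y => T y \/ y = x) => M; split.
- case=> /HT [HM HTM] Hx; split=> // y [/HTM //|->//].
- case=> HM HTM; split; last by apply: HTM; right.
  by apply/HT; split=> // y Hy; apply: HTM; left.
Qed.

Lemma K (HN : max_noetherian A) : forall C, max_closed C -> PhiK C.
Proof.
apply: noeth_ind => // C [T HT] IH.
case: (classic (exists C1 C2, max_closed C1 /\ max_closed C2 /\
          strict_sub C1 C /\ strict_sub C2 C /\ forall M, C M -> C1 M \/ C2 M)).
- move=> [C1 [C2 [HC1 [HC2 [HS1 [HS2 Hcov]]]]]].
  have [m1 [Q1 [H1a H1b]]] := IH C1 HC1 HS1.
  have [m2 [Q2 [H2a H2b]]] := IH C2 HC2 HS2.
  exists (m1 + m2)%N, (fun k => if (k < m1)%N then Q1 k else Q2 (k - m1)%N).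
  split.
  + move=> k Hk; case: ifP => Hk1.
    * have [J V] := H1a k Hk1; split=> // M HM HQ; apply: HS1.1; exact: V.
    * have Hk2 : (k - m1 < m2)%N by lia.
      have [J V] := H2a _ Hk2; split=> // M HM HQ; apply: HS2.1; exact: V.
  + move=> P HP HV.
    have : Vsub P C1 \/ Vsub P C2.
      apply: NNPP => Hn.
      have [M1 [HM1 [HPM1 nC1]]] : exists M1, is_maximal_ideal M1 /\ subsetA P M1 /\ ~ C1 M1.
        apply: NNPP => Hn1; apply: Hn; left => M HM HPM.
        by apply: NNPP => nC; apply: Hn1; exists M.
      have [M2 [HM2 [HPM2 nC2]]] : exists M2, is_maximal_ideal M2 /\ subsetA P M2 /\ ~ C2 M2.
        apply: NNPP => Hn1; apply: Hn; right => M HM HPM.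
        by apply: NNPP => nC; apply: Hn1; exists M.
      case: HC1 => T1 HT1; case: HC2 => T2 HT2.
      have [a [Ta na]] : exists a, T1 a /\ ~ M1 a.
        apply: NNPP => Hn1; apply: nC1; apply/HT1; split=> // y Hy.
        by apply: NNPP => ny; apply: Hn1; exists y.
      have [b [Tb nb]] : exists b, T2 b /\ ~ M2 b.
        apply: NNPP => Hn1; apply: nC2; apply/HT2; split=> // y Hy.
        by apply: NNPP => ny; apply: Hn1; exists y.
      have Pab : P (a * b).
        case: HP => [[HPI _ _] HPJ]; apply/HPJ => M HM HPM.
        case: (Hcov M (HV M HM HPM)) => [/HT1 [HMm HTM]|/HT2 [HMm HTM]].
        * by apply: idealMr; [case: HM|apply: HTM].
        * by apply: idealMl; [case: HM|apply: HTM].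
      case: HP => [[_ _ Hpr] _]; case: (Hpr _ _ Pab) => [/HPM1 // | /HPM2 //].
    case=> HV'.
    * have [k [Hk Hs]] := H1b P HP HV'; exists k; split; first by lia.
      by rewrite Hk.
    * have [k [Hk Hs]] := H2b P HP HV'; exists (m1 + k)%N; split; first by lia.
      have -> : (m1 + k < m1)%N = false by lia.
      by have -> : (m1 + k - m1 = k)%N by lia.
- move=> nR.
  case: (classic (exists M0, C M0)) => [[M0 HM0]|nE]; last first.
    exists 0%N, (fun _ _ => True); split=> [k //|P HP HV].
    have [M [HM HPM]] := jprime_has_max HP.
    by exfalso; apply: nE; exists M; apply: HV.
  pose Q := fun x => forall M, C M -> M x.
  have HTQ : subsetA T Q by move=> t Ht M /HT [_ H]; apply: H.
  have HQI : is_ideal Q.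
    split.
    - by move=> M /HT [[HI _ _] _]; apply: ideal0.
    - move=> x y Hx Hy M HM; have [[HI _ _] _] := proj1 (HT M) HM.
      by apply: idealD => //; [apply: Hx|apply: Hy].
    - move=> a x Hx M HM; have [[HI _ _] _] := proj1 (HT M) HM.
      by apply: idealMl => //; apply: Hx.
  have HQ : is_jprime Q.
    split; [split=> //|].
    - by move=> HQ1; have [[_ H1 _] _] := (proj1 (HT M0) HM0); apply: H1; apply: HQ1.
    - move=> a b Hab; apply: NNPP => Hn.
      have [M1 [HCM1 nM1]] : exists M1, C M1 /\ ~ M1 a.
        apply: NNPP => H1; apply: Hn; left => M HM; apply: NNPP => nM; apply: H1; by exists M.
      have [M2 [HCM2 nM2]] : exists M2, C M2 /\ ~ M2 b.
        apply: NNPP => H1; apply: Hn; right => M HM; apply: NNPP => nM; apply: H1; by exists M.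
      apply: nR; exists (fun M => C M /\ M a), (fun M => C M /\ M b).
      split; first exact: (closed_sub HT).
      split; first exact: (closed_sub HT).
      split; first by split; [by move=> M []| exists M1; split=> // -[]].
      split; first by split; [by move=> M []| exists M2; split=> // -[]].
      move=> M HM; have HMp := max_prime (proj1 (proj1 (HT M) HM)).
      case: HMp => _ _ Hp; case: (Hp a b (Hab M HM)) => ?; [left|right]; by split.
    - move=> x; split.
      + by move=> Hx M HM HQM; apply: HQM.
      + move=> Hx M HM; apply: Hx; first by case: (proj1 (HT M) HM).
        by move=> y Hy; apply: Hy.
  exists 1%N, (fun _ => Q); split.
  + move=> k _; split=> // M HM HQM; apply/HT; split=> // t Ht; apply: HQM; exact: HTQ.
  + move=> P HP HV; exists 0%N; split=> // x Hx.
    case: HP => _ HPJ; apply/HPJ => M HM HPM; apply: Hx; exact: HV.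
Qed.

Definition Cov (S : A -> Prop) (m : nat) (Q : nat -> A -> Prop) :=
  (forall k, (k < m)%N -> is_jprime (Q k) /\ subsetA S (Q k)) /\
  (forall P, is_jprime P -> subsetA S P -> exists k, (k < m)%N /\ subsetA (Q k) P).

Definition pairwise_inc (m : nat) (Q : nat -> A -> Prop) :=
  forall j k, (j < m)%N -> (k < m)%N -> j <> k -> exists w, Q j w /\ ~ Q k w.

Lemma cov_exists (HN : max_noetherian A) S : exists m Q, Cov S m Q.
Proof.
pose C := fun M => is_maximal_ideal M /\ subsetA S M.
have HCc : max_closed C by exists S.
have [m [Q [Ha Hb]]] := K HN HCc.
exists m, Q; split.
- move=> k Hk; have [HJ HV] := Ha k Hk; split=> // s Hs.
  case: HJ => _ HJ; apply/HJ => M HM HQM; exact: (HV M HM HQM).2.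
- move=> P HP HSP; apply: Hb => // M HM HPM; split=> // s Hs; apply: HPM; exact: HSP.
Qed.

Lemma prune S : forall n m Q, (m <= n)%N -> Cov S m Q ->
  exists m' Q', Cov S m' Q' /\ pairwise_inc m' Q'.
Proof.
elim=> [|n IH] m Q Hmn HC.
  exists m, Q; split=> // j k Hj; lia.
case: (classic (pairwise_inc m Q)) => Hp; first by exists m, Q.
have [j [k [Hj [Hk [Hjk Hsub]]]]] : exists j k, (j < m)%N /\ (k < m)%N /\ j <> k /\
    subsetA (Q j) (Q k).
  apply: NNPP => Hn; apply: Hp => j k Hj Hk Hjk; apply: NNPP => Hw; apply: Hn.
  exists j, k; do 3!split=> //; move=> x Hx; apply: NNPP => nx; apply: Hw; by exists x.
pose Q' := fun i => if (i < k)%N then Q i else Q i.+1.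
have Hidx : forall t, (t < m)%N -> t <> k -> exists t', (t' < m.-1)%N /\ Q' t' = Q t.
  move=> t Ht Htk; case: (ltnP t k) => Htk'.
  - by exists t; split; [lia| rewrite /Q' Htk'].
  - exists t.-1; split; first lia.
    rewrite /Q'; have -> : (t.-1 < k)%N = false by lia.
    by have -> : t.-1.+1 = t by lia.
apply: (IH m.-1 Q'); first lia.
case: HC => Ha Hb; split.
- move=> i Hi; rewrite /Q'; case: ifP => _; apply: Ha; lia.
- move=> P HP HSP; have [t [Ht HtP]] := Hb P HP HSP.
  case: (classic (t = k)) => Htk.
  + subst t; have [t' [Ht' E]] := Hidx j Hj Hjk.
    exists t'; split=> // x; rewrite E => Hx; apply: HtP; exact: Hsub.
  + have [t' [Ht' E]] := Hidx t Ht Htk; exists t'; split=> //; by rewrite E.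
Qed.

Lemma sep1 m (Q : nat -> A -> Prop) k :
  (forall i, (i < m)%N -> is_prime_ideal (Q i)) -> pairwise_inc m Q -> (k < m)%N ->
  forall n, exists x, ~ Q k x /\ forall j, (j < n)%N -> (j < m)%N -> j <> k -> Q j x.
Proof.
move=> Hpr Hpw Hk; elim=> [|n [x [Hx Hj]]].
  exists 1; split=> [|j //]; by case: (Hpr k Hk).
case: (classic ((n < m)%N /\ n <> k)) => [[Hnm Hnk]|Hn].
- have [w [Hw nw]] := Hpw n k Hnm Hk Hnk.
  exists (w * x); split.
  + by case: (Hpr k Hk) => _ _ Hp /Hp [].
  + move=> j Hjn Hjm Hjk; have [HI _ _] := Hpr j Hjm.
    case: (ltnP j n) => Hjn'.
    * apply: idealMl => //; exact: Hj.
    * have Ejn : j = n by lia.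
      by subst j; apply: idealMr.
- exists x; split=> // j Hjn Hjm Hjk; apply: Hj => //.
  case: (ltnP j n) => // Hjn'; exfalso; apply: Hn; split; [lia|]; move=> E; apply: Hjk; lia.
Qed.

Lemma sep m (Q : nat -> A -> Prop) (tau : nat -> Prop) :
  (forall i, (i < m)%N -> is_prime_ideal (Q i)) -> pairwise_inc m Q ->
  exists c, forall k, (k < m)%N -> (tau k -> ~ Q k c) /\ (~ tau k -> Q k c).
Proof.
move=> Hpr Hpw.
suff : forall n, exists c, forall k, (k < m)%N ->
   (((k < n)%N /\ tau k) -> ~ Q k c) /\ (~ ((k < n)%N /\ tau k) -> Q k c).
  move=> /(_ m) [c Hc]; exists c => k Hk; have [H1 H2] := Hc k Hk; split.
  - by move=> Ht; apply: H1.
  - by move=> Ht; apply: H2 => -[].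
elim=> [|n [c Hc]].
  exists 0 => k Hk; split; first by case.
  by move=> _; case: (Hpr k Hk) => HI _ _; apply: ideal0.
case: (classic ((n < m)%N /\ tau n)) => [[Hnm Htn]|Hn].
- have [x [nx Hx]] := sep1 Hpr Hpw Hnm m.
  exists (c + x) => k Hk; have [HI _ _] := Hpr k Hk; have [Hc1 Hc2] := Hc k Hk.
  case: (classic (k = n)) => Hkn.
  + subst k; split.
    * move=> _ Hs; apply: nx; have -> : x = (c + x) - c by ring.
      apply: idealB => //; apply: Hc2; case; lia.
    * by move=> H; exfalso; apply: H; split.
  + have Hxk : Q k x by apply: Hx.
    split.
    * move=> [Hk1 Htk] Hs; apply: Hc1; [split=> //; lia|].
      have -> : c = (c + x) - x by ring. exact: idealB.
    * move=> H; apply: idealD => //; apply: Hc2 => -[Hk1 Htk]; apply: H; split=> //; lia.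
- exists c => k Hk; have [Hc1 Hc2] := Hc k Hk; split.
  + move=> [Hk1 Htk]; apply: Hc1; split=> //.
    case: (ltnP k n) => // Hkn; have Ekn : k = n by lia.
    by subst k; exfalso; apply: Hn.
  + move=> H; apply: Hc2 => -[Hk1 Htk]; apply: H; split=> //; lia.
Qed.

Definition Rel (pre acc : seq A) (bd : A) :=
  forall x, x \in pre -> exists y r, y \in acc /\ x = y + r * bd.

Definition Inv (acc : seq A) (bd : A) (i : nat) :=
  forall P, is_jprime P -> (forall y, y \in acc -> P y) -> ~ P bd ->
    exists Qc, jprime_chain Qc i /\ Qc i = P.

Lemma unit_notin (Q : A -> Prop) (e : A) : is_prime_ideal Q -> is_unit e -> ~ Q e.
Proof.
case=> HI H1 _ [f Hf] He; apply: H1; rewrite -Hf; exact: idealMr.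
Qed.

Lemma game (HN : max_noetherian A) d (Hd : dimMax_le_sub2 A d) bs bd :
  forall rest pre acc i, bs = pre ++ rest -> (i + size rest = d.-1)%N ->
    Rel pre acc bd -> Inv acc bd i ->
    afsr_game (fun x => x \in rcons bs bd) bd rest acc.
Proof.
elim=> [|b rest IH] pre acc i Ebs Hsz HR HI /=.
- move=> M HM Hgen.
  have Hacc : forall y, y \in acc -> M y.
    move=> y Hy; apply: Hgen => I HII HS; exact: HS.
  have HMI : is_ideal M by case: HM.
  case: (classic (M bd)) => Hbd.
  + move=> x Hx; apply: Hx => //.
    move=> y; rewrite mem_rcons in_cons => /orP [/eqP -> //|Hy].
    move: Hy; rewrite Ebs cats0 => /HR [z [r [Hz ->]]].
    apply: idealD => //; [exact: Hacc|exact: idealMl].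
  + have [Qc [Hc _]] := HI M (max_jprime HM) Hacc Hbd.
    have := Hd Qc i Hc; move: Hsz => /= Hsz; lia.
- have [m0 [Q0 HC0]] := cov_exists HN (fun y => y \in acc).
  have [m [Q [[Hca Hcb] Hpw]]] := prune (leqnn m0) HC0.
  have Hpr : forall k, (k < m)%N -> is_prime_ideal (Q k) by move=> k /Hca [[]].
  have [c Hc] := sep (fun k => Q k b) Hpr Hpw.
  exists c => e He.
  apply: (IH (rcons pre b) _ i.+1).
  + by rewrite Ebs cat_rcons.
  + move: Hsz => /=; lia.
  + move=> x; rewrite mem_rcons in_cons => /orP [/eqP ->|Hx].
    * exists (b + e * c * bd), (- (e * c)); split; first by rewrite mem_rcons mem_head.
      ring.
    * have [y [r [Hy ->]]] := HR x Hx; exists y, r; split=> //.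
      by rewrite mem_rcons in_cons Hy orbT.
  + move=> P HP Hacc' Hbd.
    have Hacc : forall y, y \in acc -> P y.
      by move=> y Hy; apply: Hacc'; rewrite mem_rcons in_cons Hy orbT.
    have Ha : P (b + e * c * bd) by apply: Hacc'; rewrite mem_rcons mem_head.
    have [k [Hk HQP]] := Hcb P HP Hacc.
    have [HQj HSQ] := Hca k Hk.
    have nbd : ~ Q k bd by move=> H; apply: Hbd; apply: HQP.
    have [Qc [[Hc1 Hc2] EQ]] := HI (Q k) HQj HSQ nbd.
    have [[HQI HQ1 HQp] _] := HQj.
    have na : ~ Q k (b + e * c * bd).
      have [Ht Hnt] := Hc k Hk.
      case: (classic (Q k b)) => Hb Ha'.
      * have : Q k (e * c * bd).
          have -> : e * c * bd = (b + e * c * bd) - b by ring.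
          exact: idealB.
        move=> /HQp [/HQp [|]|] //.
        - exact: (unit_notin HQj.1 He).
        - exact: Ht.
      * apply: (Hb); have -> : b = (b + e * c * bd) - (bd * e) * c by ring.
        apply: idealB => //; apply: idealMl => //; exact: (Hnt Hb).
    exists (fun j => if (j <= i)%N then Qc j else P); split; last by rewrite ltnn.
    split.
    * move=> j Hj; case: ifP => Hji; first exact: Hc1.
      done.
    * move=> j Hj; have Hji : (j <= i)%N by lia.
      rewrite Hji; case: (ltnP j i) => Hji'.
      - exact: Hc2.
      - have Ej : j = i by lia.
        subst j; split; first by rewrite EQ.
        by exists (b + e * c * bd); split=> //; rewrite EQ.
Qed.

End Proofs.

Theorem lemma2 (A : comPzRingType) (d : nat) :
  max_noetherian A -> dimMax_le_sub2 A d -> AFSR A d.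
Proof.
move=> HN Hd bs bd Hs.
apply: (game HN Hd (pre := [::]) (i := 0%N)) => //.
move=> P HP _ _; exists (fun _ => P); split=> //; split=> // j; lia.
Qed.
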